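(* For every backward trie $\mathsf{T}_b$ with $n\ge 3$ nodes, the suffix tree $\mathsf{STree}(\mathsf{T}_b)$ has at most $2n-3$ nodes and at most $2n-4$ edges, independently of the alphabet size.
   Context: An alphabet $\Sigma$ is a finite ordered set of characters. A forward trie $\mathsf{T}_f$ is a rooted tree with $n$ nodes in which every edge is directed from parent to child and labeled by a single character of $\Sigma$, such that the edges leaving any node carry pairwise distinct labels. The backward trie $\mathsf{T}_b$ is obtained from $\mathsf{T}_f$ by reversing the direction of every edge while keeping its label; it has the same $n$ nodes and the same root $r$. For nodes $u,v$ with $u$ an ancestor of $v$ (possibly $u=v$), $\mathrm{str}_b(v,u)$ is the string of labels read along the reversed (upward) path from $v$ to $u$. Define $\mathrm{Suffix}(\mathsf{T}_b)=\{\mathrm{str}_b(v,r): v \text{ a node}\}$. For a finite set $S$ of strings, its compact tree is obtained from the trie of all prefixes of strings in $S$ (one node per prefix, the root being the empty string, an edge labeled $a$ from $X$ to $Xa$) by deleting every non-root node that has exactly one child and merging its two incident edges into one edge labeled by the concatenation of their labels. The suffix tree $\mathsf{STree}(\mathsf{T}_b)$ is the compact tree of $\mathrm{Suffix}(\mathsf{T}_b)$. *)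

(* Defs.v *)
From mathcomp Require Import all_boot.
Set Implicit Arguments. Unset Strict Implicit. Unset Printing Implicit Defensive.

(* A trie on the finite node type T (n = #|T| nodes) with root r is given by a
   parent map par (with par r = r by convention) and a labelling lab : the
   forward edge par v -> v (v <> r) carries label lab v.  Reversing edges
   (backward trie) keeps the same nodes, root and labels. *)

Definition is_forward_trie (Sigma T : finType) (r : T) (par : T -> T)
    (lab : T -> Sigma) : Prop :=
  [/\ par r = r,
      (forall v : T, exists k : nat, iter k par v = r) &
      (forall u v : T, u != r -> v != r -> par u = par v -> lab u = lab v -> u = v)].

(* str_b(v, r): labels read upward from v to the root.  The fuel #|T| is
   enough since every node has depth < #|T| in a trie. *)
Fixpoint strb_fuel (Sigma T : finType) (r : T) (par : T -> T) (lab : T -> Sigma)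
    (k : nat) (v : T) : seq Sigma :=
  match k with
  | 0 => [::]
  | k'.+1 => if v == r then [::] else lab v :: strb_fuel r par lab k' (par v)
  end.

Definition strb (Sigma T : finType) (r : T) (par : T -> T) (lab : T -> Sigma)
    (v : T) : seq Sigma := strb_fuel r par lab #|T| v.

Definition suffixes_b (Sigma T : finType) (r : T) (par : T -> T)
    (lab : T -> Sigma) : seq (seq Sigma) :=
  undup [seq strb r par lab v | v <- enum T].

Section Compact.
Variable Sigma : eqType.

Definition prefixes_of (s : seq Sigma) : seq (seq Sigma) :=
  [seq take i s | i <- iota 0 (size s).+1].

Definition trie_nodes (S : seq (seq Sigma)) : seq (seq Sigma) :=
  undup (flatten (map prefixes_of S)).

Definition trie_nchildren (S : seq (seq Sigma)) (X : seq Sigma) : nat :=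
  count (fun Y => (size Y == (size X).+1) && (take (size X) Y == X)) (trie_nodes S).

Definition ctree_nodes (S : seq (seq Sigma)) : seq (seq Sigma) :=
  [seq X <- trie_nodes S | (X == [::]) || (trie_nchildren S X != 1)].

Definition sprefix (X Y : seq Sigma) : bool := prefix X Y && (X != Y).

Definition ctree_edges (S : seq (seq Sigma)) : seq (seq Sigma * seq Sigma) :=
  [seq p <- [seq (X, Y) | X <- ctree_nodes S, Y <- ctree_nodes S]
     | sprefix p.1 p.2 &&
       ~~ has (fun Z => sprefix p.1 Z && sprefix Z p.2) (ctree_nodes S)].
End Compact.

(* Main.v *)
Require Import Defs.
From mathcomp Require Import all_boot.
From mathcomp Require Import zify.
Set Implicit Arguments. Unset Strict Implicit. Unset Printing Implicit Defensive.

Section Gen.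
Variable Sigma : eqType.
Variable S : seq (seq Sigma).
Local Notation P := (trie_nodes S).
Definition child (X Y : seq Sigma) : bool :=
  (size Y == (size X).+1) && (take (size X) Y == X).
Local Notation nch := (trie_nchildren S).

Lemma nchE X : nch X = count (child X) P. Proof. by []. Qed.

Lemma memP X : reflect (exists2 s, s \in S & exists2 i, i <= size s & X = take i s) (X \in P).
Proof.
rewrite /trie_nodes mem_undup; apply: (iffP flattenP).
- move=> [ps /mapP [s sS ->]] /mapP [i]; rewrite mem_iota add0n ltnS => ? ->.
  by exists s => //; exists i.
- move=> [s sS [i lei ->]]; exists (prefixes_of s); first by apply/mapP; exists s.
  by apply/mapP; exists i => //; rewrite mem_iota add0n ltnS.
Qed.

Lemma P_take X j : X \in P -> take j X \in P.
Proof.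
move=> /memP [s sS [i lei ->]]; apply/memP; exists s => //.
exists (minn j i); first by rewrite geq_min lei orbT.
by rewrite take_min.
Qed.

Lemma S_P s : s \in S -> s \in P.
Proof. move=> sS; apply/memP; exists s => //; exists (size s) => //; by rewrite take_size. Qed.

Lemma uniqP : uniq P. Proof. exact: undup_uniq. Qed.

Lemma count_sum (T : Type) (a : pred T) (s : seq T) :
  count a s = \sum_(y <- s) nat_of_bool (a y).
Proof. elim: s => [|x s IH]; by rewrite ?big_nil ?big_cons //= IH. Qed.

Lemma sum_nch : [::] \in P -> \sum_(X <- P) nch X + 1 <= size P.
Proof.
move=> nilP.
have -> : \sum_(X <- P) nch X = \sum_(Y <- P) count (fun X => child X Y) P.
  rewrite (eq_bigr (fun X => \sum_(Y <- P) nat_of_bool (child X Y))); last first.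
    by move=> X _; rewrite nchE count_sum.
  rewrite exchange_big; apply: eq_bigr => Y _; by rewrite count_sum.
have H : forall Y, Y \in P -> count (fun X => child X Y) P <= (Y != [::]).
  move=> Y YP; case: Y YP => [|y Y'] YP.
    rewrite leqn0 -(count_pred0 P); apply/eqP/eq_count => X /=. by rewrite /child.
  apply: (@leq_trans (count (pred1 (take (size Y') (y :: Y'))) P)).
    apply: sub_count => X /andP [/eqP /= [hs] /eqP ht] /=; by rewrite hs ht.
  rewrite count_uniq_mem ?uniqP //; by case: (_ \in _).
apply: (@leq_trans (\sum_(Y <- P) nat_of_bool (Y != [::]) + 1)).
  rewrite leq_add2r big_seq [X in _ <= X]big_seq; apply: leq_sum => Y; exact: H.
rewrite -count_sum.
have := count_predC (pred1 [::]) P; rewrite count_uniq_mem ?uniqP // nilP.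
move=> <-; by rewrite addnC leq_add2r.
Qed.

Lemma nch_pos X Y : Y \in P -> size X < size Y -> take (size X) Y = X -> 0 < nch X.
Proof.
move=> YP lt ht; rewrite nchE -has_count; apply/hasP; exists (take (size X).+1 Y).
  exact: P_take.
by rewrite /child size_takel // eqxx take_takel // ht eqxx.
Qed.

Lemma leaf_S X : X \in P -> nch X = 0 -> X \in S.
Proof.
move=> /memP [s sS [i lei ->]] h0.
case: (ltnP i (size s)) => [lt|ge]; last by rewrite take_oversize.
have := @nch_pos (take i s) s (S_P sS); rewrite size_takel ?(ltnW lt) // h0.
by move=> /(_ lt erefl).
Qed.

Definition leaves := [seq X <- P | nch X == 0].

Lemma root_pos s : s \in S -> s != [::] -> 0 < nch [::].
Proof.
move=> sS ne; apply: (@nch_pos [::] s (S_P sS)); last exact: take0.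
by case: s ne {sS}.
Qed.

Lemma leaves_bound : [::] \in S -> (exists2 s, s \in S & s != [::]) ->
  size leaves + 1 <= size S.
Proof.
move=> nilS [s sS ne].
have : uniq ([::] :: leaves).
  rewrite /= filter_uniq ?uniqP // andbT mem_filter negb_and.
  by rewrite -lt0n (root_pos sS ne).
move=> /(@uniq_leq_size _ _ S) /=; rewrite addn1; apply=> X.
rewrite inE => /orP [/eqP -> //|]; rewrite mem_filter => /andP [/eqP h XP].
exact: leaf_S.
Qed.

Lemma kept_count : [::] \in P ->
  count (fun X => nch X != 1) P + 1 <= 2 * size leaves.
Proof.
move=> nilP.
have e1 : \sum_(X <- P) (nat_of_bool (nch X != 1) + 1) <=
          \sum_(X <- P) (nat_of_bool (nch X == 0) + nat_of_bool (nch X == 0) + nch X).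
  apply: leq_sum => X _; case: (nch X) => [|[|k]] //=.
move: e1; rewrite !big_split /= -!count_sum sum1_size.
have := sum_nch nilP; rewrite /leaves size_filter; lia.
Qed.

Lemma nodes_bound : [::] \in P ->
  size (ctree_nodes S) + 1 <= 2 * size leaves + (nch [::] == 1).
Proof.
move=> nilP; have := kept_count nilP; rewrite /ctree_nodes /leaves !size_filter.
case: eqP => h1.
  have := count_predUI (pred1 [::]) (fun X => nch X != 1) P.
  rewrite count_uniq_mem ?uniqP // nilP /=.
  have -> : count (predU (pred1 [::]) (fun X => nch X != 1)) P =
            count (fun X => (X == [::]) || (nch X != 1)) P by apply: eq_count.
  lia.
have -> : count (fun X => (X == [::]) || (nch X != 1)) P = count (fun X => nch X != 1) P.
  apply: eq_count => X; case: eqP => // ->; by apply/esym/eqP.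
lia.
Qed.

Lemma leaves_nseq (a : Sigma) : (forall s, s \in S -> s = nseq (size s) a) ->
  size leaves <= 1.
Proof.
move=> hS.
have key : forall X Y, X \in leaves -> Y \in leaves -> size X <= size Y.
  move=> X Y; rewrite !mem_filter => /andP [/eqP hX XP] /andP [/eqP hY YP].
  rewrite leqNgt; apply/negP => lt.
  have XS := leaf_S XP hX; have YS := leaf_S YP hY.
  suff h : 0 < nch Y by rewrite hY in h.
  apply: (@nch_pos Y X XP lt).
  by rewrite (hS _ XS) (hS _ YS) size_nseq take_nseq // ltnW.
have eqX : forall X Y, X \in leaves -> Y \in leaves -> X = Y.
  move=> X Y XL YL.
  have XS : X \in S by move: XL; rewrite mem_filter => /andP [/eqP h XP]; exact: leaf_S.
  have YS : Y \in S by move: YL; rewrite mem_filter => /andP [/eqP h XP]; exact: leaf_S.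
  rewrite (hS _ XS) (hS _ YS); congr nseq; apply/eqP; rewrite eqn_leq.
  by rewrite !key.
case E: leaves => [|x rest] //.
have xL : x \in leaves by rewrite E inE eqxx.
have := @uniq_leq_size _ leaves [:: x] (filter_uniq _ uniqP).
rewrite E /=; apply => Y YL; rewrite inE; apply/eqP; apply: eqX => //.
by rewrite E.
Qed.

Lemma edges_bound : [::] \in ctree_nodes S ->
  size (ctree_edges S) + 1 <= size (ctree_nodes S).
Proof.
move=> nilK.
set K := ctree_nodes S.
have uK : uniq K by rewrite /K /ctree_nodes filter_uniq // uniqP.
set E := ctree_edges S.
have memE : forall p, p \in E -> [/\ p.1 \in K, p.2 \in K, sprefix p.1 p.2 &
     ~~ has (fun Z => sprefix p.1 Z && sprefix Z p.2) K].
  move=> p; rewrite /E /ctree_edges mem_filter => /andP [/andP [h1 h2]].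
  case/allpairsP => [[x y] /= [xK yK e]]; subst p; split => //.
have uE : uniq E.
  rewrite /E /ctree_edges; apply: filter_uniq; apply: allpairs_uniq => //.
  by move=> [? ?] [? ?] _ _ /= [-> ->].
have inj : {in E &, injective snd}.
  move=> [X1 Y] [X2 Y'] h1 h2 /= eY. subst Y'.
  have [X1K _ sp1 nh1] := memE _ h1; have [X2K _ sp2 nh2] := memE _ h2.
  move: sp1 sp2; rewrite /sprefix !prefixE /= => /andP [/eqP t1 n1] /andP [/eqP t2 n2].
  congr pair.
  case: (ltngtP (size X1) (size X2)) => c.
  - case/negP: nh1; apply/hasP; exists X2; first exact: X2K.
    have e12 : take (size X1) X2 = X1 by rewrite -{1}t2 take_takel // ltnW.
    rewrite /= /sprefix !prefixE e12 t2 !eqxx n2 /= andbT.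
    by apply/eqP => e; move: c; rewrite e ltnn.
  - case/negP: nh2; apply/hasP; exists X1; first exact: X1K.
    have e12 : take (size X2) X1 = X2 by rewrite -{1}t1 take_takel // ltnW.
    rewrite /= /sprefix !prefixE e12 t1 !eqxx n1 /= andbT.
    by apply/eqP => e; move: c; rewrite e ltnn.
  - by rewrite -t1 -t2 c.
have : uniq ([::] :: map snd E).
  rewrite /= map_inj_in_uniq // uE andbT; apply/mapP => [[[X Y]]] /memE [/= _ _].
  rewrite /sprefix prefixE => /andP [/eqP t n] _ e; subst Y.
  by move: t n; case: X.
move=> /(@uniq_leq_size _ _ K) /=; rewrite size_map addn1; apply => Z.
rewrite inE => /orP [/eqP -> //|/mapP [p /memE [_ ? _ _] ->]] //.
Qed.
End Gen.

Section Spec.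
Variables (Sigma T : finType) (r : T) (par : T -> T) (lab : T -> Sigma).

Lemma strb_lab k v x : x \in strb_fuel r par lab k v -> exists2 w, w != r & x = lab w.
Proof.
elim: k v => [|k IH] v //=; case: eqP => // hv.
rewrite inE => /orP [/eqP ->|/IH //]; exists v => //; exact/eqP.
Qed.

Lemma card_pos : 0 < #|T|.
Proof. by apply/card_gt0P; exists r. Qed.

Lemma strb_r : strb r par lab r = [::].
Proof. by rewrite /strb; case: #|T| card_pos => //= n _; rewrite eqxx. Qed.

Lemma strb_nr v : v != r -> exists t, strb r par lab v = lab v :: t.
Proof.
move=> hv; rewrite /strb; case: #|T| card_pos => //= n _.
by rewrite (negbTE hv); eexists.
Qed.

Lemma mem_suff s : s \in suffixes_b r par lab -> exists v, s = strb r par lab v.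
Proof. by rewrite /suffixes_b mem_undup => /mapP [v _ ->]; exists v. Qed.

Lemma suff_mem v : strb r par lab v \in suffixes_b r par lab.
Proof. by rewrite /suffixes_b mem_undup; apply: map_f; rewrite mem_enum. Qed.

Lemma size_suff : size (suffixes_b r par lab) <= #|T|.
Proof. by rewrite /suffixes_b (leq_trans (size_undup _)) // size_map -cardT. Qed.

End Spec.

Unset Implicit Arguments.
Theorem theorem2 (Sigma T : finType) (r : T) (par : T -> T) (lab : T -> Sigma) :
  is_forward_trie r par lab -> 3 <= #|T| ->
  size (ctree_nodes (suffixes_b r par lab)) <= 2 * #|T| - 3 /\
  size (ctree_edges (suffixes_b r par lab)) <= 2 * #|T| - 4.
Proof.
move=> [hpr _ hinj] n3.
set S := suffixes_b r par lab.
have [v0 hv0] : exists v0, v0 != r.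
  case: (pickP (fun v => v != r)) => [v hv|none]; first by exists v.
  have : size (enum T) <= size [:: r].
    apply: uniq_leq_size; first exact: enum_uniq.
    move=> v _; rewrite inE; move: (none v) => /= /negbFE //.
  by rewrite -cardT /= => h; move: n3; rewrite ltnNge (leq_trans h).
have nilS : [::] \in S by rewrite -(strb_r r par lab) suff_mem.
have [t0 e0] := strb_nr par lab hv0.
have neS : exists2 s, s \in S & s != [::].
  by exists (strb r par lab v0); [exact: suff_mem | rewrite e0].
have nilP : [::] \in trie_nodes S by apply: S_P.
have nb := nodes_bound nilP.
have lb := leaves_bound nilS neS.
have sS : size S <= #|T| by apply: size_suff.
have eb : size (ctree_edges S) + 1 <= size (ctree_nodes S).
  apply: edges_bound; by rewrite mem_filter eqxx nilP.
suff : size (ctree_nodes S) <= 2 * #|T| - 3 by lia.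
rewrite /S in lb sS eb nb *.
case: eqP nb => h1 /= nb; last first.
  set nS := size (suffixes_b r par lab) in lb sS. set nL := size (leaves (suffixes_b r par lab)) in lb nb *. set nK := size (ctree_nodes (suffixes_b r par lab)) in eb nb *.
  set N := #|T| in n3 sS *. clearbody nS nL nK N. lia.
have labs : forall v, v != r -> lab v = lab v0.
  move=> v hv; apply/eqP; apply: contraT => ne.
  have [t e] := strb_nr par lab hv.
  have inP : forall w t, strb r par lab w = lab w :: t -> [:: lab w] \in trie_nodes S.
    move=> w t' ew; have := @P_take _ S _ 1 (S_P (suff_mem r par lab w)).
    by rewrite ew /= take0.
  have : uniq [:: [:: lab v]; [:: lab v0]] by rewrite /= inE andbT; apply: contra ne => /eqP [->].
  move=> /(@uniq_leq_size _ _ [seq X <- trie_nodes S | child [::] X]) /=.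
  rewrite size_filter -nchE h1 => /(_ _) H; suff : 2 <= 1 by [].
  apply: H => X; rewrite !inE mem_filter => /orP [] /eqP ->; rewrite /child /=.
    exact: inP e.
  exact: inP e0.
have ln : size (leaves S) <= 1.
  apply: (@leaves_nseq _ S (lab v0)) => s /mem_suff [v ->].
  apply/all_pred1P/allP => x /strb_lab [w hw ->] /=; by rewrite labs.
rewrite /S in ln.
set nS := size (suffixes_b r par lab) in lb sS. set nL := size (leaves (suffixes_b r par lab)) in lb nb ln *. set nK := size (ctree_nodes (suffixes_b r par lab)) in eb nb *.
set N := #|T| in n3 sS *. clearbody nS nL nK N. lia.
Qed.
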